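(* Let $0\le t\le 1$ and $u>0$, and let $D=\mathrm{DASEP}(3,3,2)$ with stationary distribution $\mathrm{Pd}$. Suppose that for every partition $\lambda$ with $\lambda_1\le 3$ and exactly $2$ nonzero parts, and all $\mu,\nu\in S_3(\lambda)$, we have $$\frac{\Pr_\lambda(\mu)}{\Pr_\lambda(\nu)}=\frac{\mathrm{Pd}(\mu)}{\mathrm{Pd}(\nu)}.$$ Then $t=1$.
   Context: For a partition $\lambda=(\lambda_1\ge\dots\ge\lambda_n\ge 0)$ of nonnegative integers, $S_n(\lambda)$ denotes the set of all distinct rearrangements of $\lambda$, viewed as words $(\mu_1,\dots,\mu_n)$ whose positions $1,\dots,n$ lie on a circle. Fix $0\le t\le 1$. ASEP($\lambda$) is the Markov chain on $S_n(\lambda)$ with transition probabilities $P_{\mu,\nu}$ defined as follows. If $\mu$ has entries $i\ne j$ in adjacent positions $k,k+1$ ($1\le k\le n-1$) and $\nu$ is obtained from $\mu$ by swapping them, then $P_{\mu,\nu}=t/n$ if $i>j$ and $P_{\mu,\nu}=1/n$ if $i<j$. If $\mu=(i,\mu_2,\dots,\mu_{n-1},j)$ with $i\ne j$ and $\nu=(j,\mu_2,\dots,\mu_{n-1},i)$, then $P_{\mu,\nu}=t/n$ if $j>i$ and $P_{\mu,\nu}=1/n$ if $i>j$. All other off-diagonal transition probabilities are $0$, and the diagonal entries are chosen so that each row sums to $1$. $\Pr_\lambda$ denotes the stationary distribution of ASEP($\lambda$). Fix also $u>0$. For positive integers $n,p,q$ with $n>q$, DASEP$(n,p,q)$ is the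 Markov chain on the set of words in $\{0,1,\dots,p\}^n$ with exactly $q$ nonzero entries (equivalently, the union of $S_n(\lambda)$ over partitions $\lambda$ with $\lambda_1\le p$ and exactly $q$ nonzero parts). Its transition probabilities are as follows. The two swap rules of ASEP apply, with probabilities $t/(3n)$ and $1/(3n)$ in place of $t/n$ and $1/n$. Replacing a single entry $i$ with $1\le i\le p-1$ by $i+1$ has probability $u/(3n)$. Replacing a single entry $i+1$ with $i\ge 1$ by $i$ has probability $1/(3n)$. All other off-diagonal transition probabilities are $0$, and the diagonal entries make each row sum to $1$. $\mathrm{Pd}$ denotes the stationary distribution of the DASEP. *)

(* Defs.v *)
From HB Require Import structures.
From mathcomp Require Import all_boot all_order all_algebra.
Set Implicit Arguments. Unset Strict Implicit. Unset Printing Implicit Defensive.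
Import Order.TTheory GRing.Theory Num.Theory.
Local Open Scope ring_scope.

(* Words of length n with entries in {0,...,p}; position i+1 of the paper is
   index i : 'I_n here. *)
Definition word (n p : nat) := {ffun 'I_n -> 'I_p.+1}.

Section Chains.
Variables (R : realFieldType) (n p : nat).
Implicit Types (mu nu lam : word n p).

Definition swapped mu nu (a b : 'I_n) : bool :=
  [&& nu a == mu b, nu b == mu a &
      [forall j, ((j != a) && (j != b)) ==> (nu j == mu j)]].

Definition replaced mu nu (a : 'I_n) (v : nat) : bool :=
  ((nu a : nat) == v) && [forall j, (j != a) ==> (nu j == mu j)].

Definition swap_off (c t : R) mu nu : R :=
  (\sum_(a : 'I_n) \sum_(b : 'I_n | val b == (val a).+1)
     (if (mu a != mu b) && swapped mu nu a b then
        (if (mu b < mu a)%N then t * c else c) else 0))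
  + (\sum_(a : 'I_n | val a == 0%N) \sum_(b : 'I_n | val b == n.-1)
     (if (mu a != mu b) && swapped mu nu a b then
        (if (mu a < mu b)%N then t * c else c) else 0)).

Definition asep_off (t : R) mu nu : R := swap_off (n%:R)^-1 t mu nu.

Definition dasep_off (t u : R) mu nu : R :=
  swap_off (3 * n%:R)^-1 t mu nu
  + \sum_(a : 'I_n)
      ((if (1 <= mu a <= p.-1)%N && replaced mu nu a (mu a).+1
        then u / (3 * n%:R) else 0)
     + (if (2 <= mu a)%N && replaced mu nu a (mu a).-1
        then (3 * n%:R)^-1 else 0)).

Definition trans (S : pred (word n p)) (off : word n p -> word n p -> R) mu nu : R :=
  if mu == nu then 1 - \sum_(z in S | z != mu) off mu z else off mu nu.

Definition is_stationary (S : pred (word n p)) (P : word n p -> word n p -> R)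
  (pi : word n p -> R) : Prop :=
  [/\ forall x, x \in S -> 0 <= pi x,
      \sum_(x in S) pi x = 1 &
      forall y, y \in S -> \sum_(x in S) pi x * P x y = pi y].

(* lam is a partition lam_1 >= ... >= lam_n >= 0 (with lam_1 <= p by typing) *)
Definition is_partition lam : bool :=
  sorted (fun x y : nat => (y <= x)%N) [seq val (lam i) | i <- enum 'I_n].

Definition nonzero_count mu : nat := #|[pred i : 'I_n | (mu i != 0 :> nat)]|.

Definition S_of lam : pred (word n p) :=
  [pred mu | perm_eq (fgraph mu) (fgraph lam)].

Definition dasep_states (q : nat) : pred (word n p) :=
  [pred mu | nonzero_count mu == q].

Definition asep_P (t : R) lam := trans (S_of lam) (asep_off t).
Definition dasep_P (q : nat) (t u : R) := trans (dasep_states q) (dasep_off t u).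

End Chains.

(* Main.v *)
Require Import Defs.
From HB Require Import structures.
From mathcomp Require Import all_boot all_order all_algebra ring lra.
From Stdlib Require Import FunctionalExtensionality.
Import Order.TTheory GRing.Theory Num.Theory.
Local Open Scope ring_scope.

Notation O0 := (@Ordinal 4 0 isT).
Notation O1 := (@Ordinal 4 1 isT).
Notation O2 := (@Ordinal 4 2 isT).
Notation O3 := (@Ordinal 4 3 isT).
Notation P0 := (@Ordinal 3 0 isT).
Notation P1 := (@Ordinal 3 1 isT).
Notation P2 := (@Ordinal 3 2 isT).

Definition mk (a b c : 'I_4) : word 3 3 := [ffun i : 'I_3 => nth a [:: a; b; c] i].
Lemma mkE a b c i : mk a b c i = nth a [:: a; b; c] i.
Proof. by rewrite ffunE. Qed.

Lemma enumI3 : enum 'I_3 = [:: P0; P1; P2].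
Proof. by apply: (inj_map val_inj); rewrite val_enum_ord. Qed.
Lemma enumI4 : enum 'I_4 = [:: O0; O1; O2; O3].
Proof. by apply: (inj_map val_inj); rewrite val_enum_ord. Qed.

Lemma big3 (T : Type) (idx : T) (op : Monoid.com_law idx) (F : 'I_3 -> T) :
  \big[op/idx]_(i : 'I_3) F i = op (F P0) (op (F P1) (F P2)).
Proof. by rewrite -big_enum enumI3 !big_cons big_nil Monoid.mulm1. Qed.
Lemma big4 (T : Type) (idx : T) (op : Monoid.com_law idx) (F : 'I_4 -> T) :
  \big[op/idx]_(i : 'I_4) F i = op (F O0) (op (F O1) (op (F O2) (F O3))).
Proof. by rewrite -big_enum enumI4 !big_cons big_nil Monoid.mulm1. Qed.

Lemma forall3 (P : pred 'I_3) : [forall j, P j] = [&& P P0, P P1 & P P2].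
Proof.
apply/forallP/and3P => [H|[H0 H1 H2] j]; first by split; apply: H.
case: j => [[|[|[|j]]] Hj] //.
- by rewrite (_ : Ordinal Hj = P0) //; apply: val_inj.
- by rewrite (_ : Ordinal Hj = P1) //; apply: val_inj.
- by rewrite (_ : Ordinal Hj = P2) //; apply: val_inj.
Qed.

Lemma mk_eq a b c a' b' c' : (mk a b c == mk a' b' c') = [&& a == a', b == b' & c == c'].
Proof.
apply/eqP/and3P => [H|[/eqP-> /eqP-> /eqP->]] //.
have H0 := congr1 (fun f : word 3 3 => f P0) H.
have H1 := congr1 (fun f : word 3 3 => f P1) H.
have H2 := congr1 (fun f : word 3 3 => f P2) H.
by move: H0 H1 H2; rewrite /= !mkE /= => -> -> ->.
Qed.

Lemma nzc a b c : nonzero_count (mk a b c) = ((a != 0 :> nat) + (b != 0 :> nat) + (c != 0 :> nat))%N.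
Proof.
by rewrite /nonzero_count -sum1_card big_mkcond /= big3 /= !inE !mkE /= addnA.
Qed.

Lemma fg a b c : tval (fgraph (mk a b c)) = [:: a; b; c].
Proof. by rewrite -codom_ffun codomE enumI3 /= !mkE. Qed.



Lemma sumW (V : zmodType) (F : word 3 3 -> V) (P : pred (word 3 3)) :
  \sum_(x | P x) F x = \sum_(a : 'I_4) \sum_(b : 'I_4) \sum_(c : 'I_4)
     (if P (mk a b c) then F (mk a b c) else 0).
Proof.
rewrite big_mkcond.
rewrite (reindex (fun q : 'I_4 * ('I_4 * 'I_4) => mk q.1 q.2.1 q.2.2)) /=; last first.
  apply: onW_bij; exists (fun x : word 3 3 => (x P0, (x P1, x P2))).
    by case=> a [b c]; rewrite !mkE.
  by move=> x; apply/ffunP => i; rewrite mkE; case: i => [[|[|[|i]]] Hi] //=;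
     congr (x _); apply: val_inj.
under [RHS]eq_bigr => a _ do rewrite pair_big.
by rewrite pair_big.
Qed.


Lemma mkF a b c : (mk a b c : 'I_3 -> 'I_4) = (fun i => nth a [:: a; b; c] i).
Proof. by apply: functional_extensionality => i; rewrite mkE. Qed.

Definition DL : seq (word 3 3) :=
 [:: mk O0 O1 O1; mk O0 O1 O2; mk O0 O1 O3; mk O0 O2 O1; mk O0 O2 O2; mk O0 O2 O3;
     mk O0 O3 O1; mk O0 O3 O2; mk O0 O3 O3;
     mk O1 O0 O1; mk O1 O0 O2; mk O1 O0 O3; mk O1 O1 O0; mk O1 O2 O0; mk O1 O3 O0;
     mk O2 O0 O1; mk O2 O0 O2; mk O2 O0 O3; mk O2 O1 O0; mk O2 O2 O0; mk O2 O3 O0;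
     mk O3 O0 O1; mk O3 O0 O2; mk O3 O0 O3; mk O3 O1 O0; mk O3 O2 O0; mk O3 O3 O0].

Lemma sum_D (V : zmodType) (F : word 3 3 -> V) (Q : pred (word 3 3)) :
  \sum_(x | (x \in @dasep_states 3 3 2) && Q x) F x = \sum_(x <- DL | Q x) F x.
Proof.
rewrite sumW.
rewrite !big4.
rewrite !inE.
rewrite !nzc.
rewrite /=.
rewrite [RHS]big_mkcond /DL.
rewrite !big_cons big_nil /=.
rewrite !add0r !addr0.
rewrite !addrA.
done.
Qed.

Definition L210 : seq (word 3 3) := [:: mk O0 O1 O2; mk O0 O2 O1; mk O1 O0 O2; mk O1 O2 O0; mk O2 O0 O1; mk O2 O1 O0].

Lemma sumS210 (V : zmodType) (F : word 3 3 -> V) (Q : pred (word 3 3)) :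
  \sum_(x | (x \in S_of (mk O2 O1 O0)) && Q x) F x = \sum_(x <- L210 | Q x) F x.
Proof.
rewrite sumW !big4 !inE !fg /= [RHS]big_mkcond /L210 !big_cons big_nil /=.
by rewrite !add0r !addr0 !addrA.
Qed.

Definition L310 : seq (word 3 3) := [:: mk O0 O1 O3; mk O0 O3 O1; mk O1 O0 O3; mk O1 O3 O0; mk O3 O0 O1; mk O3 O1 O0].

Lemma sumS310 (V : zmodType) (F : word 3 3 -> V) (Q : pred (word 3 3)) :
  \sum_(x | (x \in S_of (mk O3 O1 O0)) && Q x) F x = \sum_(x <- L310 | Q x) F x.
Proof.
rewrite sumW !big4 !inE !fg /= [RHS]big_mkcond /L310 !big_cons big_nil /=.
by rewrite !add0r !addr0 !addrA.
Qed.

Definition L320 : seq (word 3 3) := [:: mk O0 O2 O3; mk O0 O3 O2; mk O2 O0 O3; mk O2 O3 O0; mk O3 O0 O2; mk O3 O2 O0].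

Lemma sumS320 (V : zmodType) (F : word 3 3 -> V) (Q : pred (word 3 3)) :
  \sum_(x | (x \in S_of (mk O3 O2 O0)) && Q x) F x = \sum_(x <- L320 | Q x) F x.
Proof.
rewrite sumW !big4 !inE !fg /= [RHS]big_mkcond /L320 !big_cons big_nil /=.
by rewrite !add0r !addr0 !addrA.
Qed.


Set Implicit Arguments. Unset Strict Implicit. Unset Printing Implicit Defensive.

Section Main.
Variables (R : realFieldType).
Implicit Types (mu nu : 'I_3 -> 'I_4).

Definition swp mu nu (a b : 'I_3) : bool :=
  let P := fun j : 'I_3 => (j != a) && (j != b) ==> (nu j == mu j) in
  [&& nu a == mu b, nu b == mu a & [&& P P0, P P1 & P P2]].

Definition sterm (c t : R) mu nu (a b : 'I_3) (tc : bool) : R :=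
  if (mu a != mu b) && swp mu nu a b then (if tc then t * c else c) else 0.

Definition swoff (c t : R) mu nu : R :=
  sterm c t mu nu P0 P1 (mu P1 < mu P0)%N + sterm c t mu nu P1 P2 (mu P2 < mu P1)%N
  + sterm c t mu nu P0 P2 (mu P0 < mu P2)%N.

Lemma swap_offE (c t : R) (mu nu : word 3 3) : swap_off c t mu nu = swoff c t mu nu.
Proof.
rewrite /swap_off /swoff /sterm /swp /swapped.
repeat progress (rewrite ?big_mkcond ?big3 /= ?forall3).
by rewrite !add0r !addr0.
Qed.

Definition rpl mu nu (a : 'I_3) (v : nat) : bool :=
  let Q := fun j : 'I_3 => (j != a) ==> (nu j == mu j) in
  ((nu a : nat) == v) && [&& Q P0, Q P1 & Q P2].

Definition rterm (u : R) mu nu (a : 'I_3) : R :=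
  (if (1 <= mu a <= 2)%N && rpl mu nu a (mu a).+1 then u / (3 * 3%:R) else 0)
  + (if (2 <= mu a)%N && rpl mu nu a (mu a).-1 then (3 * 3%:R)^-1 else 0).

Definition doff (t u : R) mu nu : R :=
  swoff (3 * 3%:R)^-1 t mu nu + (rterm u mu nu P0 + (rterm u mu nu P1 + rterm u mu nu P2)).

Lemma dasep_offE (t u : R) (mu nu : word 3 3) : dasep_off t u mu nu = doff t u mu nu.
Proof.
rewrite /dasep_off swap_offE /doff /rterm /rpl /replaced big3 /= !forall3 /=.
done.
Qed.

Lemma asep_offE (t : R) (mu nu : word 3 3) : asep_off t mu nu = swoff (3%:R)^-1 t mu nu.
Proof. by rewrite /asep_off swap_offE. Qed.

Lemma balance (S : pred (word 3 3)) (off : word 3 3 -> word 3 3 -> R) pi y :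
  is_stationary S (trans S off) pi -> y \in S ->
  \sum_(x | (x \in S) && (x != y)) pi x * off x y =
  pi y * \sum_(z | (z \in S) && (z != y)) off y z.
Proof.
case=> _ _ Hst Hy; move: (Hst y Hy); rewrite (bigD1 y) //= {1}/trans eqxx => H.
have E : \sum_(i in S | i != y) pi i * trans S off i y = \sum_(i in S | i != y) pi i * off i y.
  by apply: eq_bigr => x /andP[_ Hne]; rewrite /trans (negbTE Hne).
rewrite E in H; nra.
Qed.

End Main.
Arguments balance {R S off pi} y _.

Lemma final_alg (R : realFieldType) (t u a b c x1 x2 x3 y1 y2 y3 : R) :
  0 <= t -> t <= 1 -> 0 < u -> x1 != 0 ->
  (1 + 2*t) * y1 = (2 + t) * x1 ->
  (1 + 2*t) * y2 = (2 + t) * x2 ->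
  (1 + 2*t) * y3 = (2 + t) * x3 ->
  u * a + x2 + t * y1 + b + t * y1 + y1 = (3 + t + 2*u) * x1 ->
  u * a + x1 + b + y2 + x1 + t * x1 = (2 + 2*t + 2*u) * y1 ->
  u * x1 + x3 + t * y2 + t * y2 + y2 = (3 + t + u) * x2 ->
  x2 + u * y1 + y3 + x2 + t * x2 = (2 + 2*t + u) * y2 ->
  u * x2 + u * b + t * y3 + c + t * y3 + y3 = (4 + t + u) * x3 ->
  u * b + x3 + u * y2 + c + x3 + t * x3 = (3 + 2*t + u) * y3 ->
  t = 1.
Proof.
move=> t0 t1 u0 /negPf x10 R1 R2 R3 e1 e2 e3 e4 e5 e6.
have D2 : y2 - x2 = (1 + 2*u) * (y1 - x1) by lra.
have D3 : y3 - x3 = (1 + u) * (y2 - x2) - u * (y1 - x1) by lra.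
have D4 : (2 + u) * (y3 - x3) = u * (y2 - x2) by lra.
have K : (y1 - x1) * (2 + 4*u + 4*u^+2 + 2*u^+3) = 0.
  rewrite D3 D2 in D4; move: D4; set d := y1 - x1 => D4; lra.
have d0 : y1 - x1 = 0.
  move/eqP: K; rewrite mulf_eq0 => /orP[/eqP //|/eqP K].
  have u2 : 0 < u^+2 by apply: exprn_gt0.
  have u3 : 0 < u^+3 by apply: exprn_gt0.
  have : 0 < 2 + 4*u + 4*u^+2 + 2*u^+3 by lra.
  by rewrite K ltxx.
have ey : y1 = x1 by lra.
rewrite ey in R1.
have : (1 - t) * x1 = 0 by lra.
move/eqP; rewrite mulf_eq0 x10 orbF subr_eq0 => /eqP; lra.
Qed.

Lemma cyc_step (R : realFieldType) (t a D : R) : 0 <= t -> t <= 1 ->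
  (t - 1) * D = (2 + t) * a -> (1 - t) * a = (1 + 2*t) * D -> a = 0 /\ D = 0.
Proof.
move=> t0 t1 H1 H2.
have H3 : (1 + 2*t) * ((t - 1) * D) = (1 + 2*t) * ((2 + t) * a) by rewrite H1.
have H4 : (t - 1) * ((1 - t) * a) = (t - 1) * ((1 + 2*t) * D) by rewrite H2.
have K : a * (3 + 3 * t + 3 * t^+2) = 0.
  have E : a * (3 + 3 * t + 3 * t^+2) = (1 + 2*t) * ((2 + t) * a) - (t - 1) * ((1 - t) * a) by ring.
  rewrite E -H3 H4; ring.
have pos : 0 < 3 + 3 * t + 3 * t^+2.
  have : 0 <= t^+2 by apply: exprn_ge0. lra.
have a0 : a = 0.
  apply/eqP; move/eqP: K; rewrite mulf_eq0 => /orP[//|/eqP K'].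
  by move: pos; rewrite K' ltxx.
split=> //; rewrite a0 mulr0 in H2.
have nz : (1 + 2 * t) != 0 by apply/eqP; lra.
by move/eqP: H2; rewrite eq_sym mulf_eq0 (negbTE nz) /= => /eqP.
Qed.

Lemma asep_alg (R : realFieldType) (t A1 A2 A3 B1 B2 B3 : R) :
  0 <= t -> t <= 1 ->
  t*B1 + t*B2 + B3 = (2+t)*A1 ->
  A1 + A2 + t*A3 = (1+2*t)*B1 ->
  A1 + t*A2 + A3 = (1+2*t)*B2 ->
  t*B1 + B2 + t*B3 = (2+t)*A2 ->
  B1 + t*B2 + t*B3 = (2+t)*A3 ->
  t*A1 + A2 + A3 = (1+2*t)*B3 ->
  A1 + A2 + A3 + B1 + B2 + B3 = 1 ->
  [/\ A2 = A1, A3 = A1, B1 = B3, B2 = B3 & (1 + 2*t) * B3 = (2 + t) * A1 /\ A1 != 0].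
Proof.
move=> t0 t1 E1 E2 E3 E4 E5 E6 S.
have [a1 d1] : A2 - A3 = 0 /\ B1 - B2 = 0 by apply: (@cyc_step _ t) => //; lra.
have [a2 d2] : A3 - A1 = 0 /\ B3 - B1 = 0 by apply: (@cyc_step _ t) => //; lra.
have eA2 : A2 = A1 by lra.
have eA3 : A3 = A1 by lra.
have eB1 : B1 = B3 by lra.
have eB2 : B2 = B3 by lra.
rewrite eA2 eA3 eB1 eB2 in E1 S *.
have R0 : (1 + 2*t) * B3 = (2 + t) * A1 by lra.
split=> //; split=> //; apply/eqP => A0; rewrite A0 mulr0 in R0.
have B0 : B3 = 0.
  move/eqP: R0; rewrite mulf_eq0 => /orP[/eqP|/eqP //]; lra.
rewrite A0 B0 in S; lra.
Qed.

Lemma sum_noQ (V : zmodType) (S : pred (word 3 3)) (L : seq (word 3 3)) (F : word 3 3 -> V) :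
  (forall Q : pred (word 3 3), \sum_(x | (x \in S) && Q x) F x = \sum_(x <- L | Q x) F x) ->
  \sum_(x in S) F x = \sum_(x <- L) F x.
Proof.
move=> H; rewrite -[RHS](H predT).
by apply: eq_bigl => x; rewrite andbT.
Qed.

Definition crel (R : realFieldType) (t : R) (Pr : word 3 3 -> R) (l m h : 'I_4) : Prop :=
  [/\ Pr (mk m h l) = Pr (mk l m h), Pr (mk h l m) = Pr (mk l m h),
      Pr (mk l h m) = Pr (mk h m l), Pr (mk m l h) = Pr (mk h m l)
    & (1 + 2*t) * Pr (mk h m l) = (2 + t) * Pr (mk l m h) /\ Pr (mk l m h) != 0].

Lemma asep210 (R : realFieldType) (t : R) (Pr : word 3 3 -> R) :
  0 <= t -> t <= 1 ->
  is_stationary (S_of (mk O2 O1 O0)) (asep_P t (mk O2 O1 O0)) Pr -> crel t Pr O0 O1 O2.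
Proof.
move=> t0 t1 Hs.
have Hsum := Hs; case: Hsum => _ Hsum _.
rewrite (sum_noQ (sumS210 _ _)) !big_cons big_nil /= in Hsum.
move: (balance (off := asep_off t) (mk O0 O1 O2) Hs).
rewrite inE !fg => /(_ isT).
rewrite !sumS210 [in LHS]big_mkcond [in RHS]big_mkcond !big_cons !big_nil /= !mk_eq /=
  !asep_offE !mkF /swoff /sterm /swp /= !(mul0r,mulr0,add0r,addr0).
move=> E1.
move: (balance (off := asep_off t) (mk O0 O2 O1) Hs).
rewrite inE !fg => /(_ isT).
rewrite !sumS210 [in LHS]big_mkcond [in RHS]big_mkcond !big_cons !big_nil /= !mk_eq /=
  !asep_offE !mkF /swoff /sterm /swp /= !(mul0r,mulr0,add0r,addr0).
move=> E2.
move: (balance (off := asep_off t) (mk O1 O0 O2) Hs).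
rewrite inE !fg => /(_ isT).
rewrite !sumS210 [in LHS]big_mkcond [in RHS]big_mkcond !big_cons !big_nil /= !mk_eq /=
  !asep_offE !mkF /swoff /sterm /swp /= !(mul0r,mulr0,add0r,addr0).
move=> E3.
move: (balance (off := asep_off t) (mk O1 O2 O0) Hs).
rewrite inE !fg => /(_ isT).
rewrite !sumS210 [in LHS]big_mkcond [in RHS]big_mkcond !big_cons !big_nil /= !mk_eq /=
  !asep_offE !mkF /swoff /sterm /swp /= !(mul0r,mulr0,add0r,addr0).
move=> E4.
move: (balance (off := asep_off t) (mk O2 O0 O1) Hs).
rewrite inE !fg => /(_ isT).
rewrite !sumS210 [in LHS]big_mkcond [in RHS]big_mkcond !big_cons !big_nil /= !mk_eq /=
  !asep_offE !mkF /swoff /sterm /swp /= !(mul0r,mulr0,add0r,addr0).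
move=> E5.
move: (balance (off := asep_off t) (mk O2 O1 O0) Hs).
rewrite inE !fg => /(_ isT).
rewrite !sumS210 [in LHS]big_mkcond [in RHS]big_mkcond !big_cons !big_nil /= !mk_eq /=
  !asep_offE !mkF /swoff /sterm /swp /= !(mul0r,mulr0,add0r,addr0).
move=> E6.
apply: asep_alg => //; lra.
Qed.

Lemma asep310 (R : realFieldType) (t : R) (Pr : word 3 3 -> R) :
  0 <= t -> t <= 1 ->
  is_stationary (S_of (mk O3 O1 O0)) (asep_P t (mk O3 O1 O0)) Pr -> crel t Pr O0 O1 O3.
Proof.
move=> t0 t1 Hs.
have Hsum := Hs; case: Hsum => _ Hsum _.
rewrite (sum_noQ (sumS310 _ _)) !big_cons big_nil /= in Hsum.
move: (balance (off := asep_off t) (mk O0 O1 O3) Hs).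
rewrite inE !fg => /(_ isT).
rewrite !sumS310 [in LHS]big_mkcond [in RHS]big_mkcond !big_cons !big_nil /= !mk_eq /=
  !asep_offE !mkF /swoff /sterm /swp /= !(mul0r,mulr0,add0r,addr0).
move=> E1.
move: (balance (off := asep_off t) (mk O0 O3 O1) Hs).
rewrite inE !fg => /(_ isT).
rewrite !sumS310 [in LHS]big_mkcond [in RHS]big_mkcond !big_cons !big_nil /= !mk_eq /=
  !asep_offE !mkF /swoff /sterm /swp /= !(mul0r,mulr0,add0r,addr0).
move=> E2.
move: (balance (off := asep_off t) (mk O1 O0 O3) Hs).
rewrite inE !fg => /(_ isT).
rewrite !sumS310 [in LHS]big_mkcond [in RHS]big_mkcond !big_cons !big_nil /= !mk_eq /=
  !asep_offE !mkF /swoff /sterm /swp /= !(mul0r,mulr0,add0r,addr0).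
move=> E3.
move: (balance (off := asep_off t) (mk O1 O3 O0) Hs).
rewrite inE !fg => /(_ isT).
rewrite !sumS310 [in LHS]big_mkcond [in RHS]big_mkcond !big_cons !big_nil /= !mk_eq /=
  !asep_offE !mkF /swoff /sterm /swp /= !(mul0r,mulr0,add0r,addr0).
move=> E4.
move: (balance (off := asep_off t) (mk O3 O0 O1) Hs).
rewrite inE !fg => /(_ isT).
rewrite !sumS310 [in LHS]big_mkcond [in RHS]big_mkcond !big_cons !big_nil /= !mk_eq /=
  !asep_offE !mkF /swoff /sterm /swp /= !(mul0r,mulr0,add0r,addr0).
move=> E5.
move: (balance (off := asep_off t) (mk O3 O1 O0) Hs).
rewrite inE !fg => /(_ isT).
rewrite !sumS310 [in LHS]big_mkcond [in RHS]big_mkcond !big_cons !big_nil /= !mk_eq /=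
  !asep_offE !mkF /swoff /sterm /swp /= !(mul0r,mulr0,add0r,addr0).
move=> E6.
apply: asep_alg => //; lra.
Qed.

Lemma asep320 (R : realFieldType) (t : R) (Pr : word 3 3 -> R) :
  0 <= t -> t <= 1 ->
  is_stationary (S_of (mk O3 O2 O0)) (asep_P t (mk O3 O2 O0)) Pr -> crel t Pr O0 O2 O3.
Proof.
move=> t0 t1 Hs.
have Hsum := Hs; case: Hsum => _ Hsum _.
rewrite (sum_noQ (sumS320 _ _)) !big_cons big_nil /= in Hsum.
move: (balance (off := asep_off t) (mk O0 O2 O3) Hs).
rewrite inE !fg => /(_ isT).
rewrite !sumS320 [in LHS]big_mkcond [in RHS]big_mkcond !big_cons !big_nil /= !mk_eq /=
  !asep_offE !mkF /swoff /sterm /swp /= !(mul0r,mulr0,add0r,addr0).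
move=> E1.
move: (balance (off := asep_off t) (mk O0 O3 O2) Hs).
rewrite inE !fg => /(_ isT).
rewrite !sumS320 [in LHS]big_mkcond [in RHS]big_mkcond !big_cons !big_nil /= !mk_eq /=
  !asep_offE !mkF /swoff /sterm /swp /= !(mul0r,mulr0,add0r,addr0).
move=> E2.
move: (balance (off := asep_off t) (mk O2 O0 O3) Hs).
rewrite inE !fg => /(_ isT).
rewrite !sumS320 [in LHS]big_mkcond [in RHS]big_mkcond !big_cons !big_nil /= !mk_eq /=
  !asep_offE !mkF /swoff /sterm /swp /= !(mul0r,mulr0,add0r,addr0).
move=> E3.
move: (balance (off := asep_off t) (mk O2 O3 O0) Hs).
rewrite inE !fg => /(_ isT).
rewrite !sumS320 [in LHS]big_mkcond [in RHS]big_mkcond !big_cons !big_nil /= !mk_eq /=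
  !asep_offE !mkF /swoff /sterm /swp /= !(mul0r,mulr0,add0r,addr0).
move=> E4.
move: (balance (off := asep_off t) (mk O3 O0 O2) Hs).
rewrite inE !fg => /(_ isT).
rewrite !sumS320 [in LHS]big_mkcond [in RHS]big_mkcond !big_cons !big_nil /= !mk_eq /=
  !asep_offE !mkF /swoff /sterm /swp /= !(mul0r,mulr0,add0r,addr0).
move=> E5.
move: (balance (off := asep_off t) (mk O3 O2 O0) Hs).
rewrite inE !fg => /(_ isT).
rewrite !sumS320 [in LHS]big_mkcond [in RHS]big_mkcond !big_cons !big_nil /= !mk_eq /=
  !asep_offE !mkF /swoff /sterm /swp /= !(mul0r,mulr0,add0r,addr0).
move=> E6.
apply: asep_alg => //; lra.
Qed.



Lemma ratio2 (R : realFieldType) (p q x y a b : R) :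
  q != 0 -> a != 0 -> b != 0 -> a * p = b * q -> p / q = x / y -> a * x = b * y /\ y != 0.
Proof.
move=> q0 a0 b0 E H.
have ep : p = b / a * q by apply: (mulfI a0); rewrite E mulrA mulrCA mulfV // mulr1.
have H2 : x / y = b / a by rewrite -H ep mulfK.
have y0 : y != 0.
  apply/eqP => y0; move: H2; rewrite y0 invr0 mulr0 => /eqP.
  by rewrite eq_sym mulf_eq0 invr_eq0 (negbTE a0) (negbTE b0).
split => //.
have -> : x = x / y * y by rewrite divfK.
by rewrite H2 mulrA mulrCA mulfV // mulr1.
Qed.

Lemma class_pd (R : realFieldType) (t : R) (Pr Pd : word 3 3 -> R) (l m h : 'I_4) :
  0 <= t -> crel t Pr l m h ->
  Pr (mk m h l) / Pr (mk l m h) = Pd (mk m h l) / Pd (mk l m h) ->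
  Pr (mk h l m) / Pr (mk l m h) = Pd (mk h l m) / Pd (mk l m h) ->
  Pr (mk l h m) / Pr (mk l m h) = Pd (mk l h m) / Pd (mk l m h) ->
  Pr (mk m l h) / Pr (mk l m h) = Pd (mk m l h) / Pd (mk l m h) ->
  Pr (mk h m l) / Pr (mk l m h) = Pd (mk h m l) / Pd (mk l m h) ->
  crel t Pd l m h.
Proof.
move=> t0 [e1 e2 e3 e4 [e5 nz]] r1 r2 r3 r4 r5.
have o1 : (1 : R) != 0 by rewrite oner_eq0.
have a0 : (1 + 2 * t) != 0 by apply/eqP; lra.
have b0 : (2 + t) != 0 by apply/eqP; lra.
have [f1 y0] := ratio2 nz o1 o1 (etrans (mul1r _) (etrans e1 (esym (mul1r _)))) r1.
have [f2 _] := ratio2 nz o1 o1 (etrans (mul1r _) (etrans e2 (esym (mul1r _)))) r2.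
have [f3 _] := ratio2 nz a0 b0 (etrans (congr1 _ e3) e5) r3.
have [f4 _] := ratio2 nz a0 b0 (etrans (congr1 _ e4) e5) r4.
have [f5 _] := ratio2 nz a0 b0 e5 r5.
rewrite !mul1r in f1 f2.
split => //; try by apply: (mulfI a0); rewrite f5.
Qed.


Lemma memS (a b c h m l : 'I_4) : perm_eq [:: a; b; c] [:: h; m; l] -> mk a b c \in S_of (mk h m l).
Proof. by rewrite inE !fg. Qed.

Lemma partS (h m l : 'I_4) : (l <= m <= h)%N -> is_partition (mk h m l).
Proof. by move=> /andP[H1 H2]; rewrite /is_partition enumI3 /= !mkE /= H1 H2. Qed.

Theorem mainTheorem2 (R : realFieldType) (t u : R) :
  0 <= t -> t <= 1 -> 0 < u ->
  forall (Pr : word 3 3 -> word 3 3 -> R) (Pd : word 3 3 -> R),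
    is_stationary (@dasep_states 3 3 2) (@dasep_P R 3 3 2 t u) Pd ->
    (forall lam : word 3 3, is_partition lam -> nonzero_count lam = 2%N ->
       is_stationary (S_of lam) (asep_P t lam) (Pr lam)) ->
    (forall lam : word 3 3, is_partition lam -> nonzero_count lam = 2%N ->
       forall mu nu, mu \in S_of lam -> nu \in S_of lam ->
         Pr lam mu / Pr lam nu = Pd mu / Pd nu) ->
    t = 1.
Proof.
move=> t0 t1 u0 Pr Pd HD HA Hr.
have P210 : is_partition (mk O2 O1 O0) by apply: partS.
have N210 : nonzero_count (mk O2 O1 O0) = 2%N by rewrite nzc.
have [e2101 e2102 e2103 e2104 [e2105 nz210]] := class_pd t0 (asep210 t0 t1 (HA _ P210 N210)) (Hr _ P210 N210 (mk O1 O2 O0) (mk O0 O1 O2) (ltac:(by apply: memS)) (ltac:(by apply: memS))) (Hr _ P210 N210 (mk O2 O0 O1) (mk O0 O1 O2) (ltac:(by apply: memS)) (ltac:(by apply: memS))) (Hr _ P210 N210 (mk O0 O2 O1) (mk O0 O1 O2) (ltac:(by apply: memS)) (ltac:(by apply: memS))) (Hr _ P210 N210 (mk O1 O0 O2) (mk O0 O1 O2) (ltac:(by apply: memS)) (ltac:(by apply: memS))) (Hr _ P210 N210 (mk O2 O1 O0) (mk O0 O1 O2) (ltac:(by apply: memS)) (ltac:(by apply: memS))).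
have P310 : is_partition (mk O3 O1 O0) by apply: partS.
have N310 : nonzero_count (mk O3 O1 O0) = 2%N by rewrite nzc.
have [e3101 e3102 e3103 e3104 [e3105 nz310]] := class_pd t0 (asep310 t0 t1 (HA _ P310 N310)) (Hr _ P310 N310 (mk O1 O3 O0) (mk O0 O1 O3) (ltac:(by apply: memS)) (ltac:(by apply: memS))) (Hr _ P310 N310 (mk O3 O0 O1) (mk O0 O1 O3) (ltac:(by apply: memS)) (ltac:(by apply: memS))) (Hr _ P310 N310 (mk O0 O3 O1) (mk O0 O1 O3) (ltac:(by apply: memS)) (ltac:(by apply: memS))) (Hr _ P310 N310 (mk O1 O0 O3) (mk O0 O1 O3) (ltac:(by apply: memS)) (ltac:(by apply: memS))) (Hr _ P310 N310 (mk O3 O1 O0) (mk O0 O1 O3) (ltac:(by apply: memS)) (ltac:(by apply: memS))).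
have P320 : is_partition (mk O3 O2 O0) by apply: partS.
have N320 : nonzero_count (mk O3 O2 O0) = 2%N by rewrite nzc.
have [e3201 e3202 e3203 e3204 [e3205 nz320]] := class_pd t0 (asep320 t0 t1 (HA _ P320 N320)) (Hr _ P320 N320 (mk O2 O3 O0) (mk O0 O2 O3) (ltac:(by apply: memS)) (ltac:(by apply: memS))) (Hr _ P320 N320 (mk O3 O0 O2) (mk O0 O2 O3) (ltac:(by apply: memS)) (ltac:(by apply: memS))) (Hr _ P320 N320 (mk O0 O3 O2) (mk O0 O2 O3) (ltac:(by apply: memS)) (ltac:(by apply: memS))) (Hr _ P320 N320 (mk O2 O0 O3) (mk O0 O2 O3) (ltac:(by apply: memS)) (ltac:(by apply: memS))) (Hr _ P320 N320 (mk O3 O2 O0) (mk O0 O2 O3) (ltac:(by apply: memS)) (ltac:(by apply: memS))).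
move: (balance (off := dasep_off t u) (mk O0 O1 O2) HD).
rewrite inE nzc => /(_ isT).
rewrite !sum_D [in LHS]big_mkcond [in RHS]big_mkcond /DL !big_cons !big_nil /= !mk_eq /=
  !dasep_offE !mkF /doff /swoff /sterm /swp /rterm /rpl /= !(mul0r,mulr0,add0r,addr0).
rewrite ?e2101 ?e2102 ?e2103 ?e2104 ?e3101 ?e3102 ?e3103 ?e3104 ?e3201 ?e3202 ?e3203 ?e3204 => D1.
move: (balance (off := dasep_off t u) (mk O0 O2 O1) HD).
rewrite inE nzc => /(_ isT).
rewrite !sum_D [in LHS]big_mkcond [in RHS]big_mkcond /DL !big_cons !big_nil /= !mk_eq /=
  !dasep_offE !mkF /doff /swoff /sterm /swp /rterm /rpl /= !(mul0r,mulr0,add0r,addr0).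
rewrite ?e2101 ?e2102 ?e2103 ?e2104 ?e3101 ?e3102 ?e3103 ?e3104 ?e3201 ?e3202 ?e3203 ?e3204 => D2.
move: (balance (off := dasep_off t u) (mk O0 O1 O3) HD).
rewrite inE nzc => /(_ isT).
rewrite !sum_D [in LHS]big_mkcond [in RHS]big_mkcond /DL !big_cons !big_nil /= !mk_eq /=
  !dasep_offE !mkF /doff /swoff /sterm /swp /rterm /rpl /= !(mul0r,mulr0,add0r,addr0).
rewrite ?e2101 ?e2102 ?e2103 ?e2104 ?e3101 ?e3102 ?e3103 ?e3104 ?e3201 ?e3202 ?e3203 ?e3204 => D3.
move: (balance (off := dasep_off t u) (mk O0 O3 O1) HD).
rewrite inE nzc => /(_ isT).
rewrite !sum_D [in LHS]big_mkcond [in RHS]big_mkcond /DL !big_cons !big_nil /= !mk_eq /=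
  !dasep_offE !mkF /doff /swoff /sterm /swp /rterm /rpl /= !(mul0r,mulr0,add0r,addr0).
rewrite ?e2101 ?e2102 ?e2103 ?e2104 ?e3101 ?e3102 ?e3103 ?e3104 ?e3201 ?e3202 ?e3203 ?e3204 => D4.
move: (balance (off := dasep_off t u) (mk O0 O2 O3) HD).
rewrite inE nzc => /(_ isT).
rewrite !sum_D [in LHS]big_mkcond [in RHS]big_mkcond /DL !big_cons !big_nil /= !mk_eq /=
  !dasep_offE !mkF /doff /swoff /sterm /swp /rterm /rpl /= !(mul0r,mulr0,add0r,addr0).
rewrite ?e2101 ?e2102 ?e2103 ?e2104 ?e3101 ?e3102 ?e3103 ?e3104 ?e3201 ?e3202 ?e3203 ?e3204 => D5.
move: (balance (off := dasep_off t u) (mk O0 O3 O2) HD).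
rewrite inE nzc => /(_ isT).
rewrite !sum_D [in LHS]big_mkcond [in RHS]big_mkcond /DL !big_cons !big_nil /= !mk_eq /=
  !dasep_offE !mkF /doff /swoff /sterm /swp /rterm /rpl /= !(mul0r,mulr0,add0r,addr0).
rewrite ?e2101 ?e2102 ?e2103 ?e2104 ?e3101 ?e3102 ?e3103 ?e3104 ?e3201 ?e3202 ?e3203 ?e3204 => D6.
apply: (@final_alg _ t u (Pd (mk O0 O1 O1)) (Pd (mk O0 O2 O2)) (Pd (mk O0 O3 O3))
  (Pd (mk O0 O1 O2)) (Pd (mk O0 O1 O3)) (Pd (mk O0 O2 O3))
  (Pd (mk O2 O1 O0)) (Pd (mk O3 O1 O0)) (Pd (mk O3 O2 O0))) => //; lra.
Qed.
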